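(* Let $G$ satisfy conditions (1)–(5) below and let $C_G\subset\mathbb{P}^{d-g}$ be defined by an admissible labeling of $\tilde G$ (see context), with homogeneous ideal $I_{C_G}=\bigcap_v I_v$. Let $\alpha\neq\beta$ be two distinct edge labels. Then $\ell(\alpha)\ell(\beta)\in I_{C_G}$ if and only if the indices appearing in $\alpha$ and the indices appearing in $\beta$ are not adjacent. More precisely, for distinct indices: (1) $x_ix_j\in I_{C_G}$ unless there is a vertex $v$ having incident edges labeled $e_i$ and $e_j$, or a vertex $v$ having incident edges labeled $e_a$ and $e_b-e_c$ with $\{a,b,c\}=\{i,j,k\}$ for some index $k$; (2) if $e_j-e_k$ is an edge label and $i\notin\{j,k\}$, then $x_i(x_j-x_k)\in I_{C_G}$ unless there is a vertex $v$ having incident edges labeled $e_i$ and $e_j$, or a vertex $v$ having incident edges labeled $e_i$ and $e_k$; (3) if $e_i-e_j$ and $e_k-e_l$ are two distinct edge labels, then $(x_i-x_j)(x_k-x_l)\in I_{C_G}$.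
   Context: Work over an algebraically closed field $k$ of characteristic zero, $S=k[x_0,\ldots,x_{d-g}]$. Conditions on the finite graph $G=(V,E)$, $d=|V|$, $g=|E|-d+1$: (1) connected; (2) simple; (3) every vertex has degree at most $3$ and some vertex has degree less than $3$; (4) the shortest path between any two distinct vertices of degree $3$ has at least $3$ edges; (5) no triangles. Let $\tilde G$ be obtained from $G$ by attaching one loop at each vertex of degree $1$. An admissible labeling of the edges of $\tilde G$: for each vertex of degree $3$ choose two indices $j\neq k$ in $\{0,\ldots,d-g\}$ and label its three edges $e_j,e_k,e_j-e_k$; label each remaining edge $e_i$ with an unused index, distinct indices being used throughout. An index $i$ appears on an edge if the edge is labeled $e_i$ or $\pm(e_i-e_j)$; indices $i$ and $j$ are adjacent if they appear on adjacent edges (distinct edges of $\tilde G$ sharing a vertex). For each vertex $v$: if $v$ has degree $3$ with edges $e_j,e_k,e_j-e_k$, $I_v=(x_i: i\neq j,k)$; otherwise $I_v$ is generated by the $x_i$ with $i$ not appearing on an edge of $\tilde G$ at $v$, together with $x_j-x_k$ if some edge at $v$ is labeled $e_j-e_k$. $L_v=V(I_v)$, $C_G=\bigcup_v L_v$. For an edge label $\alpha$, $\ell(\alpha)=x_i$ if $\alpha=e_i$ and $\ell(\alpha)=x_i-x_j$ if $\alpha=e_i-e_j$. *)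

(* Defs.v *)
From HB Require Import structures.
From mathcomp Require Import all_boot all_order all_algebra.
From mathcomp Require Import mpoly.
Set Implicit Arguments. Unset Strict Implicit. Unset Printing Implicit Defensive.
Import GRing.Theory.
Local Open Scope ring_scope.

(* Edges of G are encoded as 2-element vertex sets [set u; w];         *)
(* the loop of G~ attached at a degree-1 vertex v is encoded as [set v]*)
Section Graph.
Variables (V : finType) (adj : rel V).

Definition deg (v : V) : nat := #|[set u | adj v u]|.

Definition gedges : {set {set V}} :=
  [set e | [exists u, exists w, adj u w && (e == [set u; w])]].

Definition genus : nat := (#|gedges| + 1 - #|V|)%N.

Definition tedges : {set {set V}} :=
  gedges :|: [set [set v] | v in [set v | deg v == 1%N]].

Definition edges_at (v : V) : {set {set V}} := [set e in tedges | v \in e].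

Definition simple_graph : Prop := ssrbool.symmetric adj /\ irreflexive adj.
Definition connected_graph : Prop := forall u v, connect adj u v.
Definition degree_condition : Prop :=
  (forall v, (deg v <= 3)%N) /\ (exists v, (deg v < 3)%N).
Definition deg3_far_apart : Prop :=
  forall u v, u != v -> deg u = 3%N -> deg v = 3%N ->
    ~~ adj u v /\ ~~ [exists w, adj u w && adj w v].
Definition triangle_free : Prop :=
  forall a b c, ~~ [&& adj a b, adj b c & adj c a].

(* Labels with indices in 'I_m: inl i is e_i, inr (j, k) is e_j - e_k. *)
Definition label (m : nat) := ('I_m + 'I_m * 'I_m)%type.

Definition lab_idx m (l : label m) : {set 'I_m} :=
  match l with inl i => [set i] | inr (j, k) => [set j; k] end.

Definition admissible m (lab : {set V} -> label m) : Prop :=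
  (forall v, deg v = 3%N -> exists j k : 'I_m, j != k /\
       [set lab e | e in edges_at v] = [set inl j; inl k; inr (j, k)]) /\
  (forall e, e \in tedges -> (forall v, v \in e -> deg v != 3%N) ->
       exists i, lab e = inl i) /\
  (* distinct indices used throughout: two distinct edges sharing an index
     are both among the edges of one degree-3 vertex *)
  (forall e f, e \in tedges -> f \in tedges -> e != f ->
       ~~ [disjoint lab_idx (lab e) & lab_idx (lab f)] ->
       exists v, deg v = 3%N /\ v \in e /\ v \in f).

Definition appears_at m (lab : {set V} -> label m) (v : V) : {set 'I_m} :=
  \bigcup_(e in edges_at v) lab_idx (lab e).

Definition is_diff m (l : label m) : bool := if l is inr _ then true else false.

Section Poly.
Variable (k : fieldType).

Definition ell m (l : label m) : {mpoly k[m]} :=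
  match l with inl i => 'X_i | inr (i, j) => 'X_i - 'X_j end.

(* generators of I_v. For a degree-3 vertex with edges e_j, e_k, e_j - e_k
   the indices appearing at v are exactly j, k, so the first part is
   (x_i : i <> j, k). *)
Definition Iv_gens m (lab : {set V} -> label m) (v : V) : seq {mpoly k[m]} :=
  [seq 'X_i | i <- enum (~: appears_at lab v)] ++
  (if deg v == 3%N then [::]
   else [seq ell (lab e) | e <- enum (edges_at v) & is_diff (lab e)]).

End Poly.
End Graph.

Definition in_ideal (R : comNzRingType) (gs : seq R) (p : R) : Prop :=
  exists cs : seq R, p = \sum_(i < size gs) cs`_i * gs`_i.

Definition in_ICG (k : fieldType) (V : finType) (adj : rel V) m
    (lab : {set V} -> label m) (p : {mpoly k[m]}) : Prop :=
  forall v : V, in_ideal (Iv_gens adj k lab v) p.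
Arguments in_ICG k {V} adj {m} lab p.

(* Main.v *)
Require Import Defs.
From HB Require Import structures.
From mathcomp Require Import all_boot all_order all_algebra.
From mathcomp Require Import mpoly.
Set Implicit Arguments. Unset Strict Implicit. Unset Printing Implicit Defensive.
Import GRing.Theory.
Local Open Scope ring_scope.

Section Ideal.
Variable R : comNzRingType.
Implicit Types (gs : seq R) (p q : R).

Lemma ideal_add gs p q : in_ideal gs p -> in_ideal gs q -> in_ideal gs (p + q).
Proof.
move=> [c1 ->] [c2 ->]; exists (mkseq (fun i => c1`_i + c2`_i) (size gs)).
rewrite -big_split /=; apply: eq_bigr => i _; by rewrite nth_mkseq // mulrDl.
Qed.

Lemma ideal_mull gs p q : in_ideal gs p -> in_ideal gs (q * p).
Proof.
move=> [c1 ->]; exists (mkseq (fun i => q * c1`_i) (size gs)).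
rewrite mulr_sumr; apply: eq_bigr => i _; by rewrite nth_mkseq // mulrA.
Qed.

Lemma ideal_mulr gs p q : in_ideal gs p -> in_ideal gs (p * q).
Proof. by move=> H; rewrite mulrC; apply: ideal_mull. Qed.

Lemma ideal_opp gs p : in_ideal gs p -> in_ideal gs (- p).
Proof. by move=> H; rewrite -mulN1r; apply: ideal_mull. Qed.

Lemma ideal_sub gs p q : in_ideal gs p -> in_ideal gs q -> in_ideal gs (p - q).
Proof. by move=> H1 H2; apply: ideal_add => //; apply: ideal_opp. Qed.

Lemma ideal_gen gs g : g \in gs -> in_ideal gs g.
Proof.
move=> Hg; have Ht : (index g gs < size gs)%N by rewrite index_mem.
exists (mkseq (fun i => (i == index g gs)%:R) (size gs)).
rewrite (bigD1 (Ordinal Ht)) //= big1 => [|i Hi].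
  by rewrite nth_mkseq // eqxx mul1r nth_index // addr0.
rewrite nth_mkseq //.
have -> : (nat_of_ord i == index g gs) = false.
  by apply/negbTE; move: Hi; apply: contra => /eqP E; apply/eqP/val_inj.
by rewrite mul0r.
Qed.

End Ideal.

Lemma ideal_eval (k : fieldType) m (gs : seq {mpoly k[m]}) p (z : 'I_m -> k) :
  in_ideal gs p -> (forall g, g \in gs -> g.@[z] = 0) -> p.@[z] = 0.
Proof.
move=> [c ->] H.
apply: (big_ind (fun x : {mpoly k[m]} => x.@[z] = 0)).
- by rewrite meval0.
- by move=> x y Hx Hy; rewrite mevalD Hx Hy addr0.
- by move=> i _; rewrite mevalM [(gs`_i).@[z]]H ?mulr0 // mem_nth.
Qed.
Section Graph.
Variables (k : fieldType) (V : finType) (adj : rel V) (m : nat)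
  (lab : {set V} -> label m).
Hypothesis Hsimp : simple_graph adj.
Hypothesis Hfar : deg3_far_apart adj.
Hypothesis Hdeg : degree_condition adj.
Hypothesis Hadm : admissible adj lab.

Local Notation A := (appears_at adj lab).
Local Notation S v := [set lab e | e in edges_at adj v].
Local Notation deg := (deg adj).

Lemma symA u w : adj u w = adj w u.
Proof. by case: Hsimp => H _; apply: H. Qed.

Lemma gen_X v i : i \notin A v -> ('X_i : {mpoly k[m]}) \in Iv_gens adj k lab v.
Proof.
by move=> H; rewrite /Iv_gens mem_cat; apply/orP; left; apply/map_f; rewrite mem_enum inE.
Qed.

Lemma gen_diff v e b c : deg v != 3%N -> e \in edges_at adj v -> lab e = inr (b, c) ->
  ('X_b - 'X_c : {mpoly k[m]}) \in Iv_gens adj k lab v.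
Proof.
move=> Hd He Hl; rewrite /Iv_gens mem_cat (negbTE Hd); apply/orP; right.
apply/mapP; exists e; first by rewrite mem_filter Hl mem_enum He.
by rewrite Hl.
Qed.

Lemma in_A v e t : e \in edges_at adj v -> t \in lab_idx (lab e) -> t \in A v.
Proof. by move=> He Ht; apply/bigcupP; exists e. Qed.

Lemma A_in v t : t \in A v -> exists2 e, e \in edges_at adj v & t \in lab_idx (lab e).
Proof. by case/bigcupP => e He Ht; exists e. Qed.

Definition z v : 'I_m -> k := fun i => (i \in A v)%:R.

Lemma gens_vanish v g : g \in Iv_gens adj k lab v -> g.@[z v] = 0.
Proof.
rewrite mem_cat => /orP [/mapP [i Hi ->] | ].
  by rewrite mevalXU /z; move: Hi; rewrite mem_enum inE => /negbTE ->.
case: ifP => _ //; move/mapP => [e He ->].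
rewrite mem_filter mem_enum in He; case/andP: He => Hd He.
case E: (lab e) Hd => [a|[b c]] //= _.
rewrite mevalB !mevalXU /z (in_A He (t := b)) ?(in_A He (t := c)) ?subrr // E !inE eqxx ?orbT //.
Qed.

Lemma notin_ideal v p : in_ideal (Iv_gens adj k lab v) p -> p.@[z v] != 0 -> False.
Proof. by move=> H; rewrite (ideal_eval (z := z v) H) ?eqxx //; apply: gens_vanish. Qed.

Lemma tedgesP e : e \in tedges adj ->
  (exists u w, adj u w /\ e = [set u; w]) \/ (exists v, deg v = 1%N /\ e = [set v]).
Proof.
rewrite /tedges inE => /orP [].
  rewrite /gedges inE => /existsP [u /existsP [w /andP [H /eqP ->]]]; left; by exists u, w.
by case/imsetP => v; rewrite inE => /eqP H ->; right; exists v.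
Qed.

Lemma edge_pair e u w : e \in tedges adj -> u \in e -> w \in e -> u != w ->
  adj u w /\ e = [set u; w].
Proof.
case/tedgesP => [[a [b [Hab ->]]] | [v [_ ->]]].
  rewrite !inE => /orP [] /eqP -> /orP [] /eqP ->; rewrite ?eqxx // => _.
  by split; [rewrite symA | rewrite setUC].
by rewrite !inE => /eqP -> /eqP ->; rewrite eqxx.
Qed.

Lemma adj_tedge u w : adj u w -> [set u; w] \in tedges adj.
Proof.
move=> H; rewrite /tedges inE; apply/orP; left; rewrite inE.
by apply/existsP; exists u; apply/existsP; exists w; rewrite H eqxx.
Qed.

Lemma edges_atE e v : (e \in edges_at adj v) = (e \in tedges adj) && (v \in e).
Proof. by rewrite inE. Qed.

Lemma no_adj33 u v : adj u v -> deg u = 3%N -> deg v = 3%N -> False.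
Proof.
move=> H H1 H2; case: (eqVneq u v) => [E|Hne].
  by case: Hsimp => _ Hirr; move: H; rewrite E Hirr.
by have [/negP] := Hfar Hne H1 H2.
Qed.

Lemma far2 u w w' : adj u w -> adj u w' -> deg w = 3%N -> deg w' = 3%N -> w = w'.
Proof.
move=> H1 H2 D1 D2; case: (eqVneq w w') => // Hne.
have [_ /negP Hn] := Hfar Hne D1 D2; exfalso; apply: Hn.
by apply/existsP; exists u; rewrite symA H1 H2.
Qed.

Lemma inr_edge e b c : e \in tedges adj -> lab e = inr (b, c) ->
  exists w, [/\ deg w = 3%N, w \in e, b != c & S w = [set inl b; inl c; inr (b, c)]].
Proof.
case: Hadm => H3 [H2 _] He Hl.
have [/existsP [w /andP [Hw /eqP D]] | Hn] := boolP [exists w in e, deg w == 3%N]; last first.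
  have [i Hi] : exists i, lab e = inl i.
    apply: H2 => // v Hv; apply/negP => /eqP D; move/negP: Hn; apply.
    by apply/existsP; exists v; rewrite Hv D.
  by rewrite Hl in Hi.
have [j [l [Hjl HS]]] := H3 w D.
have : lab e \in S w by apply: imset_f; rewrite edges_atE He Hw.
rewrite HS Hl !inE /= => /eqP [E1 E2]; subst.
by exists w; split.
Qed.

Lemma Lp v j l g t : deg v = 3%N -> S v = [set inl j; inl l; inr (j, l)] ->
  g \in tedges adj -> t \in lab_idx (lab g) -> t \in [set j; l] -> v \in g.
Proof.
case: Hadm => _ [_ Hd] Dv HS Hg Ht Htjl.
have : inl t \in S v.
  by rewrite HS !inE; move: Htjl; rewrite !inE => /orP [] /eqP ->; rewrite eqxx ?orbT.
case/imsetP => e0 He0 Hl0.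
case: (eqVneq g e0) => [-> | Hne]; first by move: He0; rewrite edges_atE => /andP [_ ->].
move: (He0); rewrite edges_atE => /andP [He0' Hv0].
have Hnd : ~~ [disjoint lab_idx (lab g) & lab_idx (lab e0)].
  apply/negP => D; move: (disjointFr D Ht); by rewrite -Hl0 /= inE eqxx.
have [w [Dw [Hwg Hwe0]]] := Hd g e0 Hg He0' Hne Hnd.
case: (eqVneq w v) => [<- | Hwv] //.
have Hvw : v != w by rewrite eq_sym.
have [Hadj _] := edge_pair He0' Hv0 Hwe0 Hvw.
by case: (no_adj33 Hadj Dv Dw).
Qed.

Lemma Lnb u v j l t : deg v = 3%N -> S v = [set inl j; inl l; inr (j, l)] ->
  t \in A u -> t \in [set j; l] -> u = v \/ adj u v.
Proof.
move=> Dv HS /A_in [g Hg Ht] Htjl.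
move: Hg; rewrite edges_atE => /andP [Hg Hug].
have Hvg := Lp Dv HS Hg Ht Htjl.
case: (eqVneq u v) => [E | Hne]; [by left | right].
by have [] := edge_pair Hg Hug Hvg Hne.
Qed.

Lemma A3 v j l t : S v = [set inl j; inl l; inr (j, l)] -> t \in A v -> t \in [set j; l].
Proof.
move=> HS /A_in [e He Ht].
have : lab e \in S v by apply: imset_f.
rewrite HS !inE => /orP [/orP [] | ] /eqP E; move: Ht; rewrite E /=;
  by rewrite !inE; case: (t == j); case: (t == l).
Qed.


Lemma other_inl u w : deg u != 3%N -> adj u w -> deg w = 3%N ->
  exists g a, g \in edges_at adj u /\ lab g = inl a.
Proof.
case: Hadm => _ [H2 _] D3 Huw Dw.
have Hle : (deg u <= 3)%N := Hdeg.1 u.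
have Hpos : (0 < deg u)%N by rewrite /Defs.deg card_gt0; apply/set0Pn; exists w; rewrite inE.
suff [g [Hg Hy]] : exists g, g \in edges_at adj u /\ forall y, y \in g -> deg y != 3%N.
  move: (Hg); rewrite edges_atE => /andP [Hg' _].
  by have [a Ha] := H2 g Hg' Hy; exists g, a.
have [D1|D1] : deg u = 1%N \/ deg u = 2%N.
  by move: Hle Hpos D3; case: (deg u) => [|[|[|[|]]]] //; auto.
- exists [set u]; split.
    rewrite edges_atE inE eqxx andbT /tedges inE; apply/orP; right.
    by apply/imsetP; exists u; rewrite // inE D1.
  by move=> y; rewrite inE => /eqP ->.
- have Hc : #|[set y | adj u y] :\ w| = 1%N.
    move: D1; rewrite /Defs.deg (cardsD1 w) inE Huw /=.
    by rewrite add1n => -[].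
  have : (0 < #|[set y | adj u y] :\ w|)%N by rewrite Hc.
  rewrite card_gt0 => /set0Pn [x]; rewrite !inE => /andP [Hxw Hux].
  exists [set u; x]; split.
    by rewrite edges_atE adj_tedge // !inE eqxx.
  move=> y; rewrite !inE => /orP [] /eqP -> //.
  apply/negP => /eqP Dx; move/negP: Hxw; apply; apply/eqP.
  by rewrite (far2 Huw Hux Dw Dx).
Qed.


Lemma notA_X u (s : {set 'I_m}) t : ~~ [exists t in s, t \in A u] -> t \in s -> t \notin A u.
Proof.
move=> Hn Ht; apply/negP => Hu; move/negP: Hn; apply.
by apply/existsP; exists t; rewrite Ht Hu.
Qed.

Lemma part3 i j p q : (exists e, e \in tedges adj /\ lab e = inr (i, j)) ->
  (exists f, f \in tedges adj /\ lab f = inr (p, q)) -> (i, j) != (p, q) ->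
  forall u, in_ideal (Iv_gens adj k lab u) (('X_i - 'X_j) * ('X_p - 'X_q)).
Proof.
move=> [e [He Hl]] [f [Hf Hlf]] Hne u.
have [v1 [D1 _ _ S1]] := inr_edge He Hl.
have [v2 [D2 _ _ S2]] := inr_edge Hf Hlf.
have Hv : v1 != v2.
  apply/eqP => E; subst v2; move: S2; rewrite S1 => S.
  have : inr (i, j) \in [set inl p; inl q; inr (p, q)] by rewrite -S !inE eqxx orbT.
  by rewrite !inE /= => /eqP [E1 E2]; move/eqP: Hne; apply; rewrite E1 E2.
case: (boolP [exists t in [set p; q], t \in A u]) => [/existsP [t /andP [Ht1 Ht2]] | Hn2]; last first.
  apply: (@ideal_mull _ _ ('X_p - 'X_q)); apply: ideal_sub; apply: ideal_gen; apply: gen_X;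
  by apply: (notA_X Hn2); rewrite !inE eqxx ?orbT.
case: (boolP [exists t in [set i; j], t \in A u]) => [/existsP [s /andP [Hs1 Hs2]] | Hn1]; last first.
  apply: ideal_mulr; apply: ideal_sub; apply: ideal_gen; apply: gen_X;
  by apply: (notA_X Hn1); rewrite !inE eqxx ?orbT.
exfalso.
have [E1|A1] := Lnb D1 S1 Hs2 Hs1; have [E2|A2] := Lnb D2 S2 Ht2 Ht1.
- by move/eqP: Hv; apply; rewrite -E1 -E2.
- by subst u; apply: (no_adj33 A2 D1 D2).
- by subst u; apply: (no_adj33 A1 D2 D1).
- by move/eqP: Hv; apply; apply: (far2 A1 A2 D1 D2).
Qed.


Ltac setcase := by apply/setP => x; rewrite !inE; do ![case: (_ == _)].

Lemma part1 i j : i != j ->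
  ((forall u, in_ideal (Iv_gens adj k lab u) ('X_i * 'X_j)) <->
       ~ ((exists v e f, e \in edges_at adj v /\ f \in edges_at adj v /\
              lab e = inl i /\ lab f = inl j) \/
          (exists v e f (a b c l : 'I_m),
              e \in edges_at adj v /\ f \in edges_at adj v /\
              lab e = inl a /\ lab f = inr (b, c) /\
              [set a; b; c] = [set i; j; l]))).
Proof.
move=> Hij; split.
- move=> HI Hex.
  have [u [Hi Hj]] : exists u, i \in A u /\ j \in A u.
    case: Hex => [[u [e [f [He [Hf [Hle Hlf]]]]]] | [u [e [f [a [b [c [l [He [Hf [Hle [Hlf Hset]]]]]]]]]]]].
      by exists u; split; [apply: (in_A He) | apply: (in_A Hf)]; rewrite ?Hle ?Hlf /= inE.
    have Hin : forall t, t \in [set i; j; l] -> t \in A u.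
      move=> t; rewrite -Hset !inE => /orP [/orP [] | ] Ht.
      + by apply: (in_A He); rewrite Hle /= inE.
      + by apply: (in_A Hf); rewrite Hlf /= !inE Ht.
      + by apply: (in_A Hf); rewrite Hlf /= !inE Ht orbT.
    by exists u; split; apply: Hin; rewrite !inE eqxx ?orbT.
  apply: (notin_ideal (HI u)).
  by rewrite mevalM !mevalXU /z Hi Hj /= mulr1 oner_eq0.
- move=> Hn u.
  case: (boolP (i \in A u)) => Hi; last first.
    by apply: (@ideal_mulr _ _ _ 'X_j); apply: ideal_gen; apply: gen_X.
  case: (boolP (j \in A u)) => Hj; last first.
    by apply: (@ideal_mull _ _ _ 'X_i); apply: ideal_gen; apply: gen_X.
  exfalso; apply: Hn.
  case: (eqVneq (deg u) 3%N) => [D|D].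
    have [a [b [Hab HS]]] := Hadm.1 u D.
    have Hi' := A3 HS Hi; have Hj' := A3 HS Hj.
    have inl_at : forall t, t \in [set a; b] -> exists2 e, e \in edges_at adj u & lab e = inl t.
      move=> t Ht; have : inl t \in S u.
        by rewrite HS !inE; move: Ht; rewrite !inE => /orP [] /eqP ->; rewrite eqxx ?orbT.
      by case/imsetP => e He ->; exists e.
    have [e He Hle] := inl_at i Hi'; have [f Hf Hlf] := inl_at j Hj'.
    by left; exists u, e, f; do !split.
  have [e He Hie] := A_in Hi; have [f Hf Hjf] := A_in Hj.
  case Ee: (lab e) Hie => [a|[b c]] /= Hie; case Ef: (lab f) Hjf => [a'|[b' c']] /= Hjf.
  + left; move: Hie Hjf; rewrite !inE => /eqP Ea /eqP Ea'; subst.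
    by exists u, e, f; do !split.
  + right; move: Hie; rewrite inE => /eqP Ea; subst a.
    move: Hjf; rewrite !inE => /orP [] /eqP Ej; [subst b' | subst c'].
      by exists u, e, f, i, j, c', c'.
    by exists u, e, f, i, b', j, b'; do !split => //; setcase.
  + right; move: Hjf; rewrite inE => /eqP Ea; subst a'.
    move: Hie; rewrite !inE => /orP [] /eqP Ei; [subst b | subst c].
      by exists u, f, e, j, i, c, c; do !split => //; setcase.
    by exists u, f, e, j, b, i, b; do !split => //; setcase.
  + move: (He) (Hf); rewrite !edges_atE => /andP [He' Hue] /andP [Hf' Huf].
    have [w [Dw Hwe _ _]] := inr_edge He' Ee.
    have [w' [Dw' Hwf _ _]] := inr_edge Hf' Ef.
    have Huw : u != w by apply/eqP => E; rewrite E Dw in D.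
    have Huw' : u != w' by apply/eqP => E; rewrite E Dw' in D.
    have [A1 E1] := edge_pair He' Hue Hwe Huw.
    have [A2 E2] := edge_pair Hf' Huf Hwf Huw'.
    have Ew := far2 A1 A2 Dw Dw'; subst w'.
    have Eef : e = f by rewrite E1 E2.
    rewrite -Eef Ee in Ef; case: Ef => Eb Ec; subst b' c'.
    have [g [a [Hg Hlg]]] := other_inl D A1 Dw.
    right; exists u, g, e, a, b, c, a; do !split => //.
    move: Hij Hie Hjf; rewrite !inE => Hij /orP [] /eqP Ei /orP [] /eqP Ej; subst;
      rewrite ?eqxx // in Hij; setcase.
Qed.

Lemma part2 i j l : (exists f, f \in tedges adj /\ lab f = inr (j, l)) ->
  i \notin [set j; l] ->
  ((forall u, in_ideal (Iv_gens adj k lab u) ('X_i * ('X_j - 'X_l))) <->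
   ~ (exists v e f, e \in edges_at adj v /\ f \in edges_at adj v /\
          lab e = inl i /\ (lab f = inl j \/ lab f = inl l))).
Proof.
move=> [f0 [Hf0 Hl0]] Hi.
have [v [Dv _ Hjl HS]] := inr_edge Hf0 Hl0.
have key : forall u f t s, f \in edges_at adj u -> lab f = inl t -> t \in [set j; l] ->
    s \in [set j; l] -> s != t -> u != v -> s \notin A u.
  move=> u f t s Hf Hlf Ht Hs Hst Huv; move: (Hf); rewrite edges_atE => /andP [Hf' Huf].
  have Htf : t \in lab_idx (lab f) by rewrite Hlf inE.
  have Hvf := Lp Dv HS Hf' Htf Ht.
  have [_ Ef] := edge_pair Hf' Huf Hvf Huv.
  apply/negP => /A_in [g Hg Hsg]; move: (Hg); rewrite edges_atE => /andP [Hg' Hug].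
  have Hvg := Lp Dv HS Hg' Hsg Hs.
  have [_ Eg] := edge_pair Hg' Hug Hvg Huv.
  by move: Hsg; rewrite Eg -Ef Hlf inE => /eqP E; rewrite E eqxx in Hst.
have uv : forall u e, e \in edges_at adj u -> lab e = inl i -> u != v.
  move=> u e He Hle; apply/eqP => E; subst u.
  have : lab e \in S v by apply: imset_f.
  rewrite HS Hle !inE => /orP [/orP [] | ] /eqP // [] E; move: Hi;
    by rewrite E !inE eqxx ?orbT.
split.
- move=> HI [u [e [f [He [Hf [Hle Hlf]]]]]].
  have Huv := uv u e He Hle.
  have Hiu : i \in A u by apply: (in_A He); rewrite Hle inE.
  case: Hlf => Hlf.
  + have Hj1 : j \in [set j; l] by rewrite !inE eqxx.
    have Hl1 : l \in [set j; l] by rewrite !inE eqxx orbT.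
    have Hlj : l != j by rewrite eq_sym.
    have Hl := key u f j l Hf Hlf Hj1 Hl1 Hlj Huv.
    have Hj : j \in A u by apply: (in_A Hf); rewrite Hlf inE.
    apply: (notin_ideal (HI u)).
    by rewrite mevalM mevalB !mevalXU /z Hiu Hj (negbTE Hl) /= subr0 mulr1 oner_eq0.
  + have Hj1 : j \in [set j; l] by rewrite !inE eqxx.
    have Hl1 : l \in [set j; l] by rewrite !inE eqxx orbT.
    have Hj := key u f l j Hf Hlf Hl1 Hj1 Hjl Huv.
    have Hl : l \in A u by apply: (in_A Hf); rewrite Hlf inE.
    apply: (notin_ideal (HI u)).
    by rewrite mevalM mevalB !mevalXU /z Hiu Hl (negbTE Hj) /= sub0r mul1r oppr_eq0 oner_eq0.
- move=> Hn u.
  case: (boolP (i \in A u)) => HiA; last first.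
    by apply: (@ideal_mulr _ _ _ ('X_j - 'X_l)); apply: ideal_gen; apply: gen_X.
  case: (boolP [exists t in [set j; l], t \in A u]) => [/existsP [t /andP [Ht1 Ht2]] | Hn2]; last first.
    apply: (@ideal_mull _ _ _ 'X_i); apply: ideal_sub; apply: ideal_gen; apply: gen_X;
    by apply: (notA_X Hn2); rewrite !inE eqxx ?orbT.
  have [E | Hadj] := Lnb Dv HS Ht2 Ht1.
    by subst u; move: Hi; rewrite (A3 HS HiA).
  have Du : deg u != 3%N by apply/eqP => D; apply: (no_adj33 Hadj D Dv).
  have Hg : [set u; v] \in edges_at adj u by rewrite edges_atE adj_tedge // !inE eqxx.
  have Hgv : [set u; v] \in edges_at adj v by rewrite edges_atE adj_tedge // !inE eqxx orbT.
  have : lab [set u; v] \in S v by apply: imset_f.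
  have Hcase : (lab [set u; v] = inl j \/ lab [set u; v] = inl l) -> False.
    move=> Hjl'; have [h Hh Hih] := A_in HiA.
    move: (Hh); rewrite edges_atE => /andP [Hh' Huh].
    case Eh: (lab h) Hih => [a|[b c]] /= Hih.
      apply: Hn; exists u, h, [set u; v]; do !split => //.
      by move: Hih; rewrite inE => /eqP ->.
    have [w [Dw Hwh _ Sw]] := inr_edge Hh' Eh.
    have Huw : u != w by apply/eqP => E; rewrite E Dw in Du.
    have [A1 _] := edge_pair Hh' Huh Hwh Huw.
    have Ew := far2 A1 Hadj Dw Dv; subst w.
    move: Sw; rewrite HS => Sw.
    have : inr (b, c) \in [set inl j; inl l; inr (j, l)] by rewrite Sw !inE eqxx orbT.
    rewrite !inE /= => /eqP [Eb Ec]; subst b c.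
    by move: Hi; rewrite Hih.
  rewrite HS !inE => /orP [/orP [] | ] /eqP Eg.
  + by case: Hcase; left.
  + by case: Hcase; right.
  + by apply: (@ideal_mull _ _ _ 'X_i); apply: ideal_gen; apply: (gen_diff Du Hg Eg).
Qed.

End Graph.
Theorem proposition1p8 (k : closedFieldType) (V : finType) (adj : rel V)
    (n : nat) (lab : {set V} -> label n.+1) :
  [pchar k] =i pred0 ->
  connected_graph adj ->
  simple_graph adj ->
  degree_condition adj ->
  deg3_far_apart adj ->
  triangle_free adj ->
  n = (#|V| - genus adj)%N ->
  admissible adj lab ->
  [/\
   (* (1) *)
   (forall i j : 'I_n.+1, i != j ->
      (in_ICG k adj lab ('X_i * 'X_j) <->
       ~ ((exists v e f, e \in edges_at adj v /\ f \in edges_at adj v /\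
              lab e = inl i /\ lab f = inl j) \/
          (exists v e f (a b c l : 'I_n.+1),
              e \in edges_at adj v /\ f \in edges_at adj v /\
              lab e = inl a /\ lab f = inr (b, c) /\
              [set a; b; c] = [set i; j; l])))),
   (* (2) *)
   (forall i j l : 'I_n.+1, (exists f, f \in tedges adj /\ lab f = inr (j, l)) ->
      i \notin [set j; l] ->
      (in_ICG k adj lab ('X_i * ('X_j - 'X_l)) <->
       ~ (exists v e f, e \in edges_at adj v /\ f \in edges_at adj v /\
              lab e = inl i /\ (lab f = inl j \/ lab f = inl l))))
   &
   (* (3) *)
   (forall i j p q : 'I_n.+1,
      (exists e, e \in tedges adj /\ lab e = inr (i, j)) ->
      (exists f, f \in tedges adj /\ lab f = inr (p, q)) ->
      (i, j) != (p, q) ->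
      in_ICG k adj lab (('X_i - 'X_j) * ('X_p - 'X_q)))].
Proof.
move=> _ _ Hsimp Hdeg Hfar _ _ Hadm; split.
- by move=> i j Hij; apply: part1.
- by move=> i j l Hex Hi; apply: part2.
- by move=> i j p q H1 H2 H3; apply: part3.
Qed.
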